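(* Let $G=(V,E)$ be a finite undirected graph, let $k>2$ be an integer, let $C$ be a configuration, and let $s\in S(C)$ be locally legitimate in $C$ (as defined in the context). Then $\mathcal{B}(s,k-1)\cap S(C)=\{s\}$.
   Context: $\mathrm{dist}$ is the graph distance in $G$, $N(u)$ the neighbourhood of $u$, and $\mathcal{B}(s,r)=\{u\in V:\mathrm{dist}(u,s)\le r\}$. Let $m=\lfloor k/2\rfloor$. A configuration $C$ assigns to each node $u$ the values $d_u\in\{0,\dots,k-1\}$, $err_u\in\{0,1\}$, and for each $i\in\{1,\dots,m-1\}$ a clock value $c_{i,u}\in\mathbb{Z}/4\mathbb{Z}$ and an arrow $b_{i,u}\in\{\uparrow,\downarrow\}$. Let $S(C)=\{u\in V: d_u=0\}$. Clock arithmetic is in $\mathbb{Z}/4\mathbb{Z}$. Predicates on a node $u$: - $\mathrm{well\_defined}(u)$: $err_u=0$, $|d_u-d_v|\le 1$ for all $v\in N(u)$, and if $d_u>0$ then some $v\in N(u)$ has $d_v=d_u-1$. - $\mathrm{leader\_down}(u)$: if $d_u=0$ then $b_{i,u}=\downarrow$ for all $i\in\{1,\dots,m-1\}$. - $\mathrm{bc\_up}(u,i)$: for every $v\in N(u)$ with $d_v=d_u-1$, $(b_{i,u},b_{i,v},c_{i,v})\in\{(\uparrow,\uparrow,c_{i,u}),(\uparrow,\downarrow,c_{i,u}),(\uparrow,\downarrow,c_{i,u}+1),(\downarrow,\downarrow,c_{i,u})\}$. - $\mathrm{bc\_down}(u,i)$: for every $v\in N(u)$ with $d_v=d_u+1$,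 $(b_{i,u},b_{i,v},c_{i,v})\in\{(\uparrow,\uparrow,c_{i,u}),(\downarrow,\uparrow,c_{i,u}),(\downarrow,\uparrow,c_{i,u}-1),(\downarrow,\downarrow,c_{i,u})\}$. - $\mathrm{branch\_coherence}(u)$: either $d_u\ge m$, or ($\mathrm{bc\_up}(u,d_u)$ holds, and $\mathrm{bc\_up}(u,i)$ and $\mathrm{bc\_down}(u,i)$ hold for all $i\in\{d_u+1,\dots,m-1\}$). (For $d_u=0$ the condition $\mathrm{bc\_up}(u,0)$ is vacuous.) A node $s\in S(C)$ is locally legitimate in $C$ if (1) every node $u\in\mathcal{B}(s,m)$ satisfies $\mathrm{well\_defined}(u)$, $\mathrm{leader\_down}(u)$, $\mathrm{branch\_coherence}(u)$ and $d_u=\mathrm{dist}(u,s)$; and (2) every node $u\in\mathcal{B}(s,k-1)\setminus\mathcal{B}(s,m)$ satisfies $k-\mathrm{dist}(u,s)\le d_u\le\mathrm{dist}(u,s)$. *)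

(* Defs.v *)
From mathcomp Require Import all_boot all_order all_algebra.
Set Implicit Arguments. Unset Strict Implicit. Unset Printing Implicit Defensive.
Import GRing.Theory.

(* A finite undirected graph is a symmetric irreflexive relation e on a finType T
   (symmetry/irreflexivity are hypotheses of the theorem). *)

Fixpoint reach (T : finType) (e : rel T) (n : nat) (u v : T) : bool :=
  match n with
  | 0 => u == v
  | n'.+1 => reach e n' u v || [exists w, e u w && reach e n' w v]
  end.

(* graph distance (meaningful when v is reachable from u; then it is < #|T|) *)
Definition dist (T : finType) (e : rel T) (u v : T) : nat :=
  find (fun n => reach e n u v) (iota 0 #|T|).

Definition ball (T : finType) (e : rel T) (s : T) (r : nat) : {set T} :=
  [set u | reach e r u s].

(* A configuration: distance variable d, error bit err, and for each index i
   a clock c i u in Z/4Z and an arrow b i u (true = up, false = down).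
   Only indices i in {1,...,m-1} are ever read. *)
Record config (T : finType) := Config {
  cd : T -> nat;
  cerr : T -> bool;
  cc : nat -> T -> 'Z_4;
  cb : nat -> T -> bool
}.

Definition S_of (T : finType) (C : config T) : {set T} := [set u | cd C u == 0].

Section Preds.
Variables (T : finType) (e : rel T) (k : nat) (C : config T).
Local Notation m := (k./2).
Local Notation d := (cd C).

Definition well_defined (u : T) : Prop :=
  cerr C u = false /\
  (forall v, e u v -> d u <= (d v).+1 /\ d v <= (d u).+1) /\
  (0 < d u -> exists v, e u v /\ (d v).+1 = d u).

Definition leader_down (u : T) : Prop :=
  d u = 0 -> forall i, 1 <= i <= m - 1 -> cb C i u = false.

Definition bc_up (u : T) (i : nat) : Prop :=
  forall v, e u v -> (d v).+1 = d u ->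
    let bu := cb C i u in let bv := cb C i v in
    let cu := cc C i u in let cv := cc C i v in
    [|| [&& bu, bv & cv == cu],
        [&& bu, ~~ bv & cv == cu],
        [&& bu, ~~ bv & cv == (cu + 1)%R] |
        [&& ~~ bu, ~~ bv & cv == cu]].

Definition bc_down (u : T) (i : nat) : Prop :=
  forall v, e u v -> d v = (d u).+1 ->
    let bu := cb C i u in let bv := cb C i v in
    let cu := cc C i u in let cv := cc C i v in
    [|| [&& bu, bv & cv == cu],
        [&& ~~ bu, bv & cv == cu],
        [&& ~~ bu, bv & cv == (cu - 1)%R] |
        [&& ~~ bu, ~~ bv & cv == cu]].

Definition branch_coherence (u : T) : Prop :=
  m <= d u \/
  (bc_up u (d u) /\
   forall i, d u + 1 <= i <= m - 1 -> bc_up u i /\ bc_down u i).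

Definition locally_legitimate (s : T) : Prop :=
  s \in S_of C /\
  (forall u, u \in ball e s m ->
     [/\ well_defined u, leader_down u, branch_coherence u & d u = dist e u s]) /\
  (forall u, u \in ball e s (k - 1) -> u \notin ball e s m ->
     k - dist e u s <= d u <= dist e u s).
End Preds.

(* Main.v *)
Require Import Defs.
From mathcomp Require Import all_boot all_order all_algebra.
From mathcomp Require Import zify.
Set Implicit Arguments. Unset Strict Implicit.

Section Aux.
Variables (T : finType) (e : rel T) (s : T).

Lemma reach_S n u : reach e n u s -> reach e n.+1 u s.
Proof. by move=> h /=; rewrite h. Qed.

Lemma reach_mono i j u : i <= j -> reach e i u s -> reach e j u s.
Proof.
move=> /subnK <-; elim: (j - i) => [|t IH] //= h.
by rewrite IH.
Qed.

Definition R i := [set v | reach e i v s].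

Lemma R_next i j : R i = R j -> R i.+1 = R j.+1.
Proof.
move=> h; apply/setP=> v; rewrite !inE /=.
have H : forall w, reach e i w s = reach e j w s.
  by move=> w; move/setP: h => /(_ w); rewrite !inE.
rewrite H; congr (_ || _); apply: eq_existsb => w; by rewrite H.
Qed.

Lemma R_stable i : R i = R i.+1 -> forall j, i <= j -> R j = R i.
Proof.
move=> h j /subnK <-; elim: (j - i) => [|t IH] //=.
by rewrite addSn; move: (R_next IH); rewrite -h.
Qed.

Lemma R_sub i : R i \subset R i.+1.
Proof. by apply/subsetP=> v; rewrite !inE; apply: reach_S. Qed.

Lemma R_growth i : (exists2 j, j <= i & R j = R j.+1) \/ i.+1 <= #|R i|.
Proof.
elim: i => [|i IH].
  right; rewrite card_gt0; apply/set0Pn; exists s; by rewrite inE /=.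
case: IH => [[j hj hR]|hc]; first by left; exists j => //; apply: leqW.
case: (boolP (R i == R i.+1)) => [/eqP hR|hne]; first by left; exists i.
right; have : R i \proper R i.+1 by rewrite properEneq hne R_sub.
by move/proper_card => h; apply: leq_ltn_trans h.
Qed.

Lemma reach_bound n u : reach e n u s -> reach e (#|T|.-1) u s.
Proof.
move=> h.
case: (leqP n (#|T|.-1)) => hn; first exact: reach_mono hn h.
case: (R_growth (#|T|.-1)) => [[j hj hR]|hc].
  have h1 : R n = R j by apply: R_stable => //; lia.
  have h2 : R (#|T|.-1) = R j by apply: R_stable.
  have : u \in R n by rewrite inE.
  by rewrite h1 -h2 inE.
have : R (#|T|.-1) = setT.
  apply/eqP; rewrite eqEcard subsetT cardsT /=.
  have hT : 0 < #|T| by apply/card_gt0P; exists s.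
  by apply: leq_trans hc; rewrite prednK.
by move/setP=> /(_ u); rewrite !inE.
Qed.

Lemma dist_le n u : reach e n u s -> dist e u s <= n.
Proof.
move=> h.
have hT : 0 < #|T| by apply/card_gt0P; exists s.
set m0 := minn n (#|T|.-1).
have hm : reach e m0 u s.
  case: (leqP n (#|T|.-1)) => hn.
    by have -> : m0 = n by rewrite /m0; lia.
  have -> : m0 = #|T|.-1 by rewrite /m0; lia.
  exact: reach_bound h.
have hm0 : m0 < #|T| by rewrite /m0; lia.
rewrite leqNgt; apply/negP=> hlt.
have hlt' : m0 < dist e u s by apply: leq_ltn_trans hlt; rewrite /m0 geq_minl.
have := before_find 0 hlt'.
by rewrite nth_iota // add0n hm.
Qed.

Lemma dist0 u : dist e u s = 0 -> u = s.
Proof.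
move=> h.
have hT : 0 < #|T| by apply/card_gt0P; exists s.
have hs : has (fun n => reach e n u s) (iota 0 #|T|).
  by rewrite has_find size_iota; move: h; rewrite /dist => ->.
have := nth_find 0 hs; rewrite /dist in h; rewrite h nth_iota //=.
by move/eqP.
Qed.

End Aux.

Theorem lemma5 (T : finType) (e : rel T) (k : nat) (C : config T) (s : T) :
  symmetric e -> irreflexive e -> 2 < k ->
  (forall u, cd C u < k) ->
  locally_legitimate e k C s ->
  ball e s (k - 1) :&: S_of C = [set s].
Proof.
move=> hsym hirr hk hd [hsS [hin hout]].
apply/setP=> u; rewrite !inE.
apply/idP/idP.
  case/andP=> hb hu0; move: (hb) => hb'.
  case: (boolP (u \in ball e s k./2)) => hm.
    case: (hin u hm) => _ _ _ hdist.
    apply/eqP; apply: (dist0 (e:=e)); by rewrite -hdist (eqP hu0).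
  have hb2 : u \in ball e s (k - 1) by rewrite inE.
  have := hout u hb2 hm; rewrite (eqP hu0) => /andP [h1 _].
  have := dist_le hb'; lia.
move/eqP=> ->; move: hsS; rewrite inE => ->; rewrite andbT.
by apply: (reach_mono (i:=0)) => //=.
Qed.
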